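(* Let $u,v\in F$ and let $\varphi$ be an endomorphism of $F$ such that $(u,v)\sim_{AC}(\varphi(u),\varphi(v))$. Then for all $u',v'\in F$, if $(u,v)\sim_{AC}(u',v')$ then $(u',v')\sim_{AC}(\varphi(u'),\varphi(v'))$.
   Context: $F=F(x,y)$ is the free group on $\{x,y\}$. The Andrews–Curtis (AC) moves on a pair $(r_1,r_2)\in F^2$ are: replace $r_i$ by $r_ir_j$ ($i\ne j$); replace $r_i$ by $r_i^{-1}$; replace $r_i$ by $w^{-1}r_iw$ for some $w\in F$. Two pairs are AC-equivalent, written $\sim_{AC}$, if one can be obtained from the other by a finite sequence of AC-moves. *)

(* Defs.v *)
(* The free group F = F(x,y) on two generators is
   modelled concretely as the set of freely reduced words over the alphabet
   {x, x^-1, y, y^-1}, with multiplication = concatenation followed by free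
   reduction. *)
From Stdlib Require Import Relation_Operators.
From mathcomp Require Import all_boot.
Set Implicit Arguments. Unset Strict Implicit. Unset Printing Implicit Defensive.

(* a letter (g, s): g = false means generator x, g = true means y;
   s = false means the generator itself, s = true means its inverse *)
Definition letter := (bool * bool)%type.
Definition inv_letter (a : letter) : letter := (a.1, ~~ a.2).

Fixpoint reduced (w : seq letter) : bool :=
  match w with
  | a :: ((b :: _) as w') => (b != inv_letter a) && reduced w'
  | _ => true
  end.

Definition reduce_cons (a : letter) (w : seq letter) : seq letter :=
  match w with
  | b :: w' => if b == inv_letter a then w' else a :: w
  | [::] => [:: a]
  end.

Definition reduce (w : seq letter) : seq letter := foldr reduce_cons [::] w.

Lemma reduced_reduce_cons a w : reduced w -> reduced (reduce_cons a w).
Proof.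
case: w => [|b w] //= H.
case: ifP => Hb.
  by case: w H => [|c w] //= /andP[].
by rewrite /= H Hb.
Qed.

Lemma reduced_reduce w : reduced (reduce w).
Proof. by elim: w => [|a w IH] //=; apply: reduced_reduce_cons. Qed.

Definition F := {w : seq letter | reduced w}.

Definition fone : F := exist _ [::] erefl.
Definition fmul (a b : F) : F :=
  exist _ (reduce (sval a ++ sval b)) (reduced_reduce _).
Definition finv (a : F) : F :=
  exist _ (reduce (map inv_letter (rev (sval a)))) (reduced_reduce _).

Definition gx : F := exist _ [:: (false, false)] erefl.
Definition gy : F := exist _ [:: (true, false)] erefl.

Definition is_endo (phi : F -> F) : Prop :=
  forall a b, phi (fmul a b) = fmul (phi a) (phi b).

Inductive ac_move : F * F -> F * F -> Prop :=
  | ac_mul12 r1 r2 : ac_move (r1, r2) (fmul r1 r2, r2)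
  | ac_mul21 r1 r2 : ac_move (r1, r2) (r1, fmul r2 r1)
  | ac_inv1 r1 r2 : ac_move (r1, r2) (finv r1, r2)
  | ac_inv2 r1 r2 : ac_move (r1, r2) (r1, finv r2)
  | ac_conj1 w r1 r2 : ac_move (r1, r2) (fmul (finv w) (fmul r1 w), r2)
  | ac_conj2 w r1 r2 : ac_move (r1, r2) (r1, fmul (finv w) (fmul r2 w)).

Definition ac_equiv (p q : F * F) : Prop := clos_refl_trans _ ac_move p q.

(* Main.v *)
Require Import Defs.
From Stdlib Require Import Relation_Operators.
From mathcomp Require Import all_boot.

Definition rc (w r : seq letter) := foldr reduce_cons r w.

Lemma invK (a : letter) : inv_letter (inv_letter a) = a.
Proof. by case: a => [g s]; rewrite /inv_letter /= negbK. Qed.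

Lemma reduced_rc w r : reduced r -> reduced (rc w r).
Proof. by elim: w => [|a w IH] //= Hr; apply: reduced_reduce_cons; apply: IH. Qed.

Lemma cancel_rc a t : reduced t -> reduce_cons a (reduce_cons (inv_letter a) t) = t.
Proof.
case: t => [|c t] /=.
  by rewrite ?invK eqxx.
case: ifP => [/eqP Hc|Hc] Ht.
  rewrite invK in Hc; subst c.
  case: t Ht => [|d t] //= /andP[Hd _].
  by rewrite (negbTE Hd).
by rewrite /= ?eqxx //=; case: ifP => //; rewrite eqxx.
Qed.

Lemma rc_reduce_cons a s r : reduced r ->
  rc (reduce_cons a s) r = reduce_cons a (rc s r).
Proof.
move=> Hr; case: s => [|b s] //=.
case: ifP => [/eqP ->|] //=.
by rewrite cancel_rc // reduced_rc.
Qed.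

Lemma rc_reduce w r : reduced r -> rc w r = rc (reduce w) r.
Proof.
move=> Hr; elim: w => [|a w IH] //=.
by rewrite rc_reduce_cons // IH.
Qed.

Lemma reduce_id r : reduced r -> reduce r = r.
Proof.
elim: r => [|a r IH] //= H.
have Hr : reduced r by case: r H {IH} => [|b r] // /andP[].
rewrite IH //.
case: r H {IH Hr} => [|b r] //= /andP[Hb _].
by rewrite (negbTE Hb).
Qed.

Lemma reduce_cat w1 w2 : reduce (w1 ++ w2) = rc w1 (reduce w2).
Proof. by rewrite /reduce foldr_cat. Qed.

Lemma rc_inv w r : reduced r -> rc (map inv_letter (rev w)) (rc w r) = r.
Proof.
move=> Hr; elim: w => [|b w IH] //=.
rewrite rev_cons map_rcons -cats1 /rc foldr_cat /=.
have := cancel_rc (inv_letter b) _ (reduced_rc w r Hr).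
rewrite invK => ->; exact: IH.
Qed.

Lemma Feq (a b : F) : sval a = sval b -> a = b.
Proof.
case: a b => [a Ha] [b Hb] /= E; subst b.
by rewrite (eq_irrelevance Ha Hb).
Qed.

Lemma fmulA a b c : fmul a (fmul b c) = fmul (fmul a b) c.
Proof.
apply: Feq; case: a b c => [a Ha] [b Hb] [c Hc] /=.
rewrite !reduce_cat (reduce_id _ Hc) (reduce_id _ Hb) (reduce_id _ (reduced_rc _ _ Hc)).
have E : rc a b = reduce (a ++ b) by rewrite reduce_cat reduce_id.
by rewrite E -(rc_reduce _ _ Hc) /rc foldr_cat.
Qed.

Lemma fmul1 a : fmul fone a = a.
Proof. by apply: Feq; case: a => a Ha /=; rewrite reduce_id. Qed.

Lemma fmul1r a : fmul a fone = a.
Proof. by apply: Feq; case: a => a Ha /=; rewrite cats0 reduce_id. Qed.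

Lemma fmulV a : fmul (Defs.finv a) a = fone.
Proof.
apply: Feq; case: a => a Ha /=.
rewrite reduce_cat -(rc_reduce _ _ (reduced_reduce _)) reduce_id //.
have := rc_inv a _ (erefl : reduced [::]).
by rewrite -(reduce_cat a [::]) cats0 reduce_id.
Qed.

Lemma fmulVr a : fmul a (Defs.finv a) = fone.
Proof.
apply: Feq; case: a => a Ha /=.
rewrite reduce_cat (reduce_id _ (reduced_reduce _)).
have := rc_inv (map inv_letter (rev a)) _ (erefl : reduced [::]).
rewrite -map_rev revK -map_comp (eq_map invK) map_id => <-.
by [].
Qed.

Lemma finvK a : Defs.finv (Defs.finv a) = a.
Proof.
by rewrite -[LHS]fmul1r -(fmulV a) fmulA fmulV fmul1.
Qed.

Definition rtc := clos_refl_trans (F * F) ac_move.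

Lemma step {p q} : ac_move p q -> ac_equiv p q.
Proof. exact: rt_step. Qed.

Lemma move_sym p q : ac_move p q -> ac_equiv q p.
Proof.
case=> [r1 r2|r1 r2|r1 r2|r1 r2|w r1 r2|w r1 r2].
- apply: rt_trans; first exact: step (ac_inv2 _ _).
  apply: rt_trans; first exact: step (ac_mul12 _ _).
  have E : fmul (fmul r1 r2) (Defs.finv r2) = r1 by rewrite -fmulA fmulVr fmul1r.
  rewrite E; have := step (ac_inv2 r1 (Defs.finv r2)); by rewrite finvK.
- apply: rt_trans; first exact: step (ac_inv1 _ _).
  apply: rt_trans; first exact: step (ac_mul21 _ _).
  have E : fmul (fmul r2 r1) (Defs.finv r1) = r2 by rewrite -fmulA fmulVr fmul1r.
  rewrite E; have := step (ac_inv1 (Defs.finv r1) r2); by rewrite finvK.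
- have := step (ac_inv1 (Defs.finv r1) r2); by rewrite finvK.
- have := step (ac_inv2 r1 (Defs.finv r2)); by rewrite finvK.
- have := step (ac_conj1 (Defs.finv w) (fmul (Defs.finv w) (fmul r1 w)) r2).
  by rewrite finvK !fmulA fmulVr fmul1 -!fmulA fmulVr fmul1r.
- have := step (ac_conj2 (Defs.finv w) r1 (fmul (Defs.finv w) (fmul r2 w))).
  by rewrite finvK !fmulA fmulVr fmul1 -!fmulA fmulVr fmul1r.
Qed.

Lemma ac_sym p q : ac_equiv p q -> ac_equiv q p.
Proof.
elim=> [x y H|x|x y z _ H1 _ H2].
- exact: move_sym.
- exact: rt_refl.
- exact: rt_trans H2 H1.
Qed.

Section Phi.
Variable phi : F -> F.
Hypothesis Hphi : is_endo phi.

Lemma phi1 : phi fone = fone.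
Proof.
have H := Hphi fone fone; rewrite fmul1 in H.
have := congr1 (fmul (Defs.finv (phi fone))) H.
by rewrite fmulA fmulV fmul1.
Qed.

Lemma phiV a : phi (Defs.finv a) = Defs.finv (phi a).
Proof.
have H := Hphi (Defs.finv a) a; rewrite fmulV phi1 in H.
rewrite -[LHS]fmul1r -(fmulVr (phi a)) fmulA -H fmul1 //.
Qed.

Lemma ac_map p q : ac_equiv p q ->
  ac_equiv (phi p.1, phi p.2) (phi q.1, phi q.2).
Proof.
elim=> [x y H|x|x y z _ H1 _ H2].
- case: H => [r1 r2|r1 r2|r1 r2|r1 r2|w r1 r2|w r1 r2] /=;
  rewrite ?Hphi ?phiV; apply: step; constructor.
- exact: rt_refl.
- exact: rt_trans H1 H2.
Qed.
End Phi.

Theorem lemma3 (u v : F) (phi : F -> F) :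
  is_endo phi ->
  ac_equiv (u, v) (phi u, phi v) ->
  forall u' v' : F, ac_equiv (u, v) (u', v') -> ac_equiv (u', v') (phi u', phi v').
Proof.
move=> Hphi H u' v' H'.
apply: rt_trans; first exact: ac_sym H'.
apply: rt_trans; first exact: H.
exact: (@ac_map phi Hphi _ _ H').
Qed.
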